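(* Let $D$ be a digraph rooted at $r$, let $x \in V(D) \setminus \{r\}$, and let $\mathcal{S}$ be a non-empty collection of subsets of $V(D) \setminus \{r\}$ such that each $S \in \mathcal{S}$ separates $x$ from $r$. Let $\bigvee \mathcal{S}$ be the set of those elements $s \in \bigcup \mathcal{S}$ that are separated from $r$ by every $S \in \mathcal{S}$. Then $\bigvee \mathcal{S}$ separates $x$ from $r$.
   Context: A vertex set $S$ separates a vertex $y$ from $r$ if every directed path from $r$ to $y$ contains a vertex of $S$. *)

(* Defs.v *)
(* A digraph D is given by a vertex type V (= V(D), possibly
   infinite) and an arc relation E : V -> V -> Prop (E u v = arc u -> v). *)
From Stdlib Require Import List.
Import ListNotations.

Fixpoint chain {V : Type} (E : V -> V -> Prop) (u : V) (l : list V) : Prop :=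
  match l with
  | [] => True
  | w :: l' => E u w /\ chain E w l'
  end.

Definition dipath {V : Type} (E : V -> V -> Prop) (r y : V) (p : list V) : Prop :=
  NoDup (r :: p) /\ chain E r p /\ last p r = y.

Definition rooted_at {V : Type} (E : V -> V -> Prop) (r : V) : Prop :=
  forall v : V, exists p : list V, dipath E r v p.

Definition separates {V : Type} (E : V -> V -> Prop) (S : V -> Prop) (y r : V) : Prop :=
  forall p : list V, dipath E r y p -> exists v, In v (r :: p) /\ S v.

Definition bigvee {V : Type} (E : V -> V -> Prop) (r : V) (SS : (V -> Prop) -> Prop)
  : V -> Prop :=
  fun s => (exists S, SS S /\ S s) /\ (forall S, SS S -> separates E S s r).

(* Main.v *)
Require Import Defs.
From Stdlib Require Import List Classical.
Import ListNotations.

Lemma last_cons' {V : Type} (h : V) (m : list V) (d : V) : last (h :: m) d = last m h.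
Proof.
  revert h d; induction m as [|c m IH]; intros h d; [reflexivity|].
  change (last (c :: m) d = last (c :: m) h). rewrite !IH. reflexivity.
Qed.

Lemma last_app' {V : Type} (l1 l2 : list V) (d : V) : last (l1 ++ l2) d = last l2 (last l1 d).
Proof.
  revert d; induction l1 as [|h t IH]; intros d; [reflexivity|].
  change (last (h :: (t ++ l2)) d = last l2 (last (h :: t) d)).
  rewrite !last_cons', IH. reflexivity.
Qed.

Lemma chain_app {V : Type} (E : V -> V -> Prop) (l1 l2 : list V) (u : V) :
  chain E u l1 -> chain E (last l1 u) l2 -> chain E u (l1 ++ l2).
Proof.
  revert u; induction l1 as [|h t IH]; intros u H1 H2; [exact H2|].
  rewrite last_cons' in H2. destruct H1 as [Hu Ht]; split; auto.
Qed.

Lemma chain_suffix {V : Type} (E : V -> V -> Prop) (a b : list V) (v z : V) :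
  chain E z (a ++ v :: b) -> chain E v b.
Proof.
  revert z; induction a as [|h t IH]; intros z H; simpl in *.
  - tauto.
  - destruct H as [_ H]. eapply IH; eauto.
Qed.

Lemma walk_path {V : Type} (E : V -> V -> Prop) (l : list V) (u : V) :
  chain E u l -> exists p, NoDup (u :: p) /\ chain E u p /\ last p u = last l u /\
    incl (u :: p) (u :: l).
Proof.
  revert u; induction l as [|w l IH]; intros u H.
  - exists []. repeat split; auto. constructor; auto. constructor. apply incl_refl.
  - destruct H as [Huw Hw]. destruct (IH w Hw) as [p' [Hnd [Hch [Hl Hinc]]]].
    destruct (classic (In u (w :: p'))) as [Hin | Hnin].
    + destruct (in_split _ _ Hin) as [a [b Hab]].
      exists b. split; [|split; [|split]].
      * rewrite Hab in Hnd. eapply NoDup_app_remove_l; eauto.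
      * assert (chain E u (w :: p')) by (simpl; auto).
        rewrite Hab in H. eapply chain_suffix; eauto.
      * rewrite last_cons'. rewrite <- Hl. rewrite <- (last_cons' w p' u).
        rewrite Hab, last_app', last_cons'. reflexivity.
      * intros z Hz. destruct Hz as [Hz|Hz]; [left; auto|].
        right. apply Hinc. rewrite Hab. apply in_or_app. right. right. auto.
    + exists (w :: p'). split; [|split; [|split]].
      * constructor; auto.
      * split; auto.
      * rewrite !last_cons'. auto.
      * intros z Hz. destruct Hz as [Hz|Hz]; [left; auto|right; auto].
Qed.

Lemma last_split {V : Type} (Q : V -> Prop) (L : list V) :
  (exists v, In v L /\ Q v) ->
  exists a v b, L = a ++ v :: b /\ Q v /\ forall w, In w b -> ~ Q w.
Proof.
  induction L as [|h t IH]; intros [v [Hv Qv]]; [destruct Hv|].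
  destruct (classic (exists v, In v t /\ Q v)) as [Ht|Ht].
  - destruct (IH Ht) as [a [v' [b [E1 [E2 E3]]]]].
    exists (h :: a), v', b. rewrite E1. auto.
  - exists [], h, t. repeat split; auto.
    + destruct Hv as [Hv|Hv]; [subst; auto|].
      exfalso; apply Ht; eauto.
    + intros w Hw Qw. apply Ht; eauto.
Qed.

Theorem lemma5p1 (V : Type) (E : V -> V -> Prop) (r x : V)
  (SS : (V -> Prop) -> Prop)
  (Hroot : rooted_at E r)
  (Hx : x <> r)
  (Hne : exists S, SS S)
  (Hsub : forall S, SS S -> forall v, S v -> v <> r)
  (Hsep : forall S, SS S -> separates E S x r) :
  separates E (bigvee E r SS) x r.
Proof.
  intros p Hp. destruct Hne as [S0 HS0].
  destruct (Hsep S0 HS0 p Hp) as [v0 [Hv0 HSv0]].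
  destruct (last_split (fun v => exists S, SS S /\ S v) (r :: p)) as [a [s [b [Hab [Qs Hb]]]]].
  { exists v0; eauto. }
  destruct Hp as [Hnd [Hch Hlast]].
  assert (Hchb : chain E s b).
  { destruct a as [|h a'].
    - simpl in Hab. injection Hab; intros; subst; auto.
    - simpl in Hab. injection Hab; intros Hp' _. rewrite Hp' in Hch.
      eapply chain_suffix; eauto. }
  assert (Hxb : last b s = x).
  { rewrite <- Hlast, <- (last_cons' r p r), Hab, last_app', last_cons'. reflexivity. }
  exists s. split.
  { rewrite Hab. apply in_or_app. right. left. auto. }
  split; [exact Qs|].
  intros S HS q [Hndq [Hchq Hlq]].
  apply NNPP; intros Hno.
  assert (Hw : chain E r (q ++ b)) by (apply chain_app; auto; rewrite Hlq; auto).
  destruct (walk_path E (q ++ b) r Hw) as [p' [Hnd' [Hch' [Hl' Hinc]]]].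
  rewrite last_app', Hlq, Hxb in Hl'.
  destruct (Hsep S HS p' (conj Hnd' (conj Hch' Hl'))) as [v [Hv HSv]].
  apply Hinc in Hv. destruct Hv as [Hv|Hv].
  - apply Hno. exists v. split; [left; auto|auto].
  - apply in_app_or in Hv. destruct Hv as [Hv|Hv].
    + apply Hno. exists v. split; [right; auto|auto].
    + apply (Hb v Hv). eauto.
Qed.
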